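(* ${\sf MBRev}(\mathcal D_{ERC}(H))=\Omega(\log\log H)$ as $H\to\infty$.
   Context: $\mathcal D_{ERC}(H)$ (equal revenue curve truncated at $H$) is the distribution on $[1,H]$ with $\Pr[v\ge t]=1/t$ for $t\in[1,H]$, i.e. density $q(v)=1/v^2$ on $[1,H)$ and an atom of mass $1/H$ at $H$. For a distribution with density $q$ on $[1,H]$ the mean-based revenue is ${\sf MBRev}=\sup_{x}\int_1^H q(v)\big(v\,x(v)-\sup_{1\le w<v}(v-w)x(w)\big)\,dv$ (plus the analogous contribution of any atom), where the supremum is over functions $x:[1,H]\to[0,1]$. Note ${\sf Mye}(\mathcal D_{ERC}(H))=1$. *)

(* Defs.v *)
From Stdlib Require Import Reals Lra ClassicalEpsilon.
Open Scope R_scope.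

(* Supremum of a set of reals; 0 by convention when the set is empty or
   unbounded above (only used on bounded sets, empty only at v = 1). *)
Definition Rsup (E : R -> Prop) : R :=
  match excluded_middle_informative (bound E /\ exists y, E y) with
  | left h => proj1_sig (completeness E (proj1 h) (proj2 h))
  | right _ => 0
  end.

Definition devgain (x : R -> R) (v : R) : R :=
  Rsup (fun r => exists w, 1 <= w < v /\ r = (v - w) * x w).

Definition mb_term (x : R -> R) (v : R) : R := v * x v - devgain x v.

(* density of D_ERC(H) on [1,H) *)
Definition q_erc (v : R) : R := 1 / (v ^ 2).

Definition admissible (H : R) (x : R -> R) : Prop :=
  forall v, 1 <= v <= H -> 0 <= x v <= 1.

(* r is the mean-based revenue of allocation x on D_ERC(H):
   integral of the density part over [1,H] plus the atom of mass 1/H at H. *)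
Definition mb_rev_erc (H : R) (x : R -> R) (r : R) : Prop :=
  exists pr : Riemann_integrable (fun v => q_erc v * mb_term x v) 1 H,
    r = RiemannInt pr + (1 / H) * mb_term x H.

Definition MBRev_ub (H M : R) : Prop :=
  forall x r, admissible H x -> mb_rev_erc H x r -> r <= M.

(* Main.v *)
Require Import Defs.
From Stdlib Require Import Reals Lra ClassicalEpsilon.
From Coquelicot Require Import Coquelicot.
Open Scope R_scope.

Lemma Rsup_ub (E : R -> Prop) y : bound E -> E y -> y <= Rsup E.
Proof.
  intros Hb Hy. unfold Rsup.
  destruct excluded_middle_informative as [a|n].
  - destruct (completeness E (proj1 a) (proj2 a)) as [s [Hu Hl]]; simpl. apply Hu; auto.
  - exfalso; apply n; split; eauto.
Qed.

Lemma Rsup_le (E : R -> Prop) B : (forall y, E y -> y <= B) -> 0 <= B -> Rsup E <= B.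
Proof.
  intros Hb H0. unfold Rsup.
  destruct excluded_middle_informative as [a|n].
  - destruct (completeness E (proj1 a) (proj2 a)) as [s [Hu Hl]]; simpl. apply Hl. intros y Hy; auto.
  - auto.
Qed.

Section X.
Variable H : R.
Hypothesis HH : 1 <= H.

Definition clip (w : R) := (w + H - Rabs (w - H)) / 2.
Definition xx (w : R) := ln (clip w) / ln H.

Lemma clip_le w : w <= H -> clip w = w.
Proof. intro; unfold clip; rewrite Rabs_left1; lra. Qed.
Lemma clip_ge w : H <= w -> clip w = H.
Proof. intro; unfold clip; rewrite Rabs_right; lra. Qed.

Hypothesis HL : 0 < ln H.

Lemma xx_bounds w : 1 <= w -> 0 <= xx w <= 1.
Proof.
  intro Hw. unfold xx. destruct (Rle_dec w H).
  - rewrite clip_le; auto. split.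
    + apply Rdiv_le_0_compat; [|lra]. rewrite <- ln_1; apply ln_le; lra.
    + apply (Rmult_le_reg_r (ln H)); auto. unfold Rdiv; rewrite Rmult_assoc, Rinv_l; [|lra].
      rewrite Rmult_1_r, Rmult_1_l. apply ln_le; lra.
  - rewrite clip_ge; [|lra]. unfold Rdiv; rewrite Rinv_r; lra.
Qed.

Lemma xx_1 : xx 1 = 0.
Proof. unfold xx; rewrite clip_le; [|lra]. rewrite ln_1; unfold Rdiv; ring. Qed.

Definition S v := fun r => exists w, 1 <= w < v /\ r = (v - w) * xx w.

Lemma S_bound v : bound (S v).
Proof.
  exists (Rabs v + 1). intros r [w [Hw ->]].
  pose proof (xx_bounds w (proj1 Hw)). pose proof (Rle_abs v).
  assert ((v - w) * xx w <= (v-w) * 1) by (apply Rmult_le_compat_l; lra). lra.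
Qed.

Lemma dg_ge0 v : 0 <= devgain xx v.
Proof.
  unfold devgain, Rsup. destruct excluded_middle_informative as [a|n]; [|lra].
  destruct (completeness _ (proj1 a) (proj2 a)) as [s [Hu Hl]]; simpl.
  destruct (proj2 a) as [y [w [Hw ->]]].
  apply Rle_trans with ((v - 1) * xx 1). rewrite xx_1; lra.
  apply Hu. exists 1; split; [lra|auto].
Qed.

Lemma dg_mono v v' : v <= v' -> devgain xx v <= devgain xx v'.
Proof.
  intro Hv. apply Rsup_le; [|apply dg_ge0].
  intros r [w [Hw ->]]. pose proof (xx_bounds w (proj1 Hw)).
  apply Rle_trans with ((v' - w) * xx w). apply Rmult_le_compat_r; lra.
  apply Rsup_ub. apply S_bound. exists w; split; [lra|auto].
Qed.

Lemma dg_lip v v' : v <= v' -> devgain xx v' <= devgain xx v + (v' - v).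
Proof.
  intro Hv. apply Rsup_le; [|pose proof (dg_ge0 v); lra].
  intros r [w [Hw ->]]. pose proof (xx_bounds w (proj1 Hw)).
  destruct (Rlt_dec w v).
  - replace ((v'-w) * xx w) with ((v-w)*xx w + (v'-v)*xx w) by ring.
    apply Rplus_le_compat. apply Rsup_ub. apply S_bound. exists w; split; [lra|auto].
    assert ((v'-v)*xx w <= (v'-v)*1) by (apply Rmult_le_compat_l; lra). lra.
  - pose proof (dg_ge0 v).
    assert ((v'-w)*xx w <= (v'-w)*1) by (apply Rmult_le_compat_l; lra). lra.
Qed.

Lemma dg_cont p : continuity_pt (devgain xx) p.
Proof.
  apply continuity_pt_locally. intro eps. exists eps. intros y Hy.
  unfold ball in Hy; simpl in Hy; unfold AbsRing_ball, abs, minus, plus, opp in Hy; simpl in Hy.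
  destruct (Rle_dec y p).
  - pose proof (dg_mono y p r). pose proof (dg_lip y p r).
    rewrite Rabs_left1; [|lra]. rewrite Rabs_left1 in Hy; lra.
  - pose proof (dg_mono p y ltac:(lra)). pose proof (dg_lip p y ltac:(lra)).
    rewrite Rabs_right; [|lra]. rewrite Rabs_right in Hy; lra.
Qed.

Lemma clip_cont p : continuity_pt clip p.
Proof.
  unfold clip. apply continuity_pt_div.
  - apply continuity_pt_minus. apply continuity_pt_plus. apply continuity_pt_id. apply continuity_pt_const; intros ? ?; auto.
    change (continuity_pt (comp Rabs (fun w => w - H)) p). apply continuity_pt_comp.
    apply continuity_pt_minus. apply continuity_pt_id. apply continuity_pt_const; intros ? ?; auto.
    apply Rcontinuity_abs.
  - apply continuity_pt_const; intros ? ?; auto.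
  - lra.
Qed.

Lemma clip_ge1 p : 1 <= p -> 1 <= clip p.
Proof. intro. destruct (Rle_dec p H). rewrite clip_le; lra. rewrite clip_ge; lra. Qed.

Lemma xx_cont p : 1 <= p -> continuity_pt xx p.
Proof.
  intro Hp. unfold xx. apply continuity_pt_div; [| apply continuity_pt_const; intros ? ?; auto | lra].
  change (continuity_pt (comp ln clip) p). apply continuity_pt_comp. apply clip_cont.
  apply continuity_pt_filterlim. apply continuous_ln. pose proof (clip_ge1 p Hp); lra.
Qed.

Lemma F_cont p : 1 <= p -> continuity_pt (fun v => q_erc v * mb_term xx v) p.
Proof.
  intro Hp. apply continuity_pt_mult.
  - unfold q_erc. apply continuity_pt_div. apply continuity_pt_const; intros ? ?; auto.
    apply derivable_continuous_pt. apply derivable_pt_pow. 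
    apply pow_nonzero; lra.
  - unfold mb_term. apply continuity_pt_minus. apply continuity_pt_mult. apply continuity_pt_id.
    apply xx_cont; auto. apply dg_cont.
Qed.

Lemma ln_le_sub1 y : 0 < y -> ln y <= y - 1.
Proof.
  intro Hy. rewrite <- (ln_exp (y - 1)). apply ln_le; auto. pose proof (exp_ineq1_le (y-1)); lra.
Qed.

Lemma mb_ge0 v : 1 <= v <= H -> 0 <= mb_term xx v.
Proof.
  intro Hv. unfold mb_term. cut (devgain xx v <= v * xx v). lra.
  assert (0 <= ln v) by (rewrite <- ln_1; apply ln_le; lra).
  assert (Hx : xx v = ln v / ln H) by (unfold xx; rewrite clip_le; lra).
  apply Rsup_le.
  - intros r [w [Hw ->]]. assert (Hxw : xx w = ln w / ln H) by (unfold xx; rewrite clip_le; lra).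
    rewrite Hx, Hxw. unfold Rdiv. rewrite <- !Rmult_assoc. apply Rmult_le_compat_r.
    left; apply Rinv_0_lt_compat; auto.
    assert (0 <= ln w <= ln v) by (split; [rewrite <- ln_1|]; apply ln_le; lra).
    nra.
  - rewrite Hx. apply Rmult_le_pos; [lra|]. apply Rdiv_le_0_compat; lra.
Qed.

Lemma key_bound v : exp 1 <= v <= H ->
  devgain xx v <= (v * ln v - v * (ln (ln v) + 1) / 2) / ln H.
Proof.
  intro Hv. pose proof (exp_pos 1).
  assert (Hu : 1 <= ln v) by (rewrite <- (ln_exp 1); apply ln_le; lra).
  set (u := ln v) in *.
  assert (Hl0 : 0 <= ln u) by (rewrite <- ln_1; apply ln_le; lra).
  assert (Hl1 : ln u <= u - 1) by (apply ln_le_sub1; lra).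
  set (l := ln u) in *.
  assert (Hm : 0 <= v * u - v * (l + 1) / 2) by (replace (v * u - v * (l + 1) / 2) with (v * (u - (l+1)/2)) by field; apply Rmult_le_pos; lra).
  apply Rsup_le.
  - intros r [w [Hw ->]]. assert (Hxw : xx w = ln w / ln H) by (unfold xx; rewrite clip_le; lra).
    rewrite Hxw. unfold Rdiv. rewrite <- Rmult_assoc. apply Rmult_le_compat_r.
    left; apply Rinv_0_lt_compat; auto.
    set (a := v / u).
    assert (Ha : 0 < a) by (unfold a; apply Rdiv_lt_0_compat; lra).
    assert (Hla : ln a = u - l) by (unfold a; rewrite ln_div; [reflexivity|lra|lra]).
    assert (Hlw : ln w <= ln a + w / a - 1).
    { pose proof (ln_le_sub1 (w / a) ltac:(apply Rdiv_lt_0_compat; lra)).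
      rewrite ln_div in H1; lra. }
    assert (Hwa : w / a = w * u / v) by (unfold a; field; lra).
    rewrite Hwa, Hla in Hlw.
    apply Rle_trans with ((v - w) * (u - l - 1 + w * u / v)).
    apply Rmult_le_compat_l; lra.
    assert (E : (v - w) * (u - l - 1 + w * u / v) = (v - w) * ((u - l - 1) * v + w * u) / v) by (field; lra).
    rewrite E. apply Rmult_le_reg_r with v; [lra|]. unfold Rdiv. rewrite Rmult_assoc, Rinv_l, Rmult_1_r; [|lra].
    set (k := (u - l - 1) * v).
    set (m := 2 * u - l - 1).
    assert (Hm0 : 0 <= m <= 2 * u) by (unfold m; lra).
    assert (S1 : u * ((v - w) * (k + w * u)) <= (v * m) * (v * m) / 4).
    { replace (u * ((v - w) * (k + w * u))) with ((u * v - w * u) * (k + w * u)) by ring.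
      replace (v * m) with (u * v + k) by (unfold k, m; ring).
      pose proof (Rle_0_sqr (u * v - w * u - k - w * u)). unfold Rsqr in *. nra. }
    assert (S2 : (v * m) * (v * m) / 4 <= u * (v * (v * u - v * (l + 1) * / 2))).
    { replace (u * (v * (v * u - v * (l + 1) * / 2))) with ((v * v) * (u * m / 2)) by (unfold m; field).
      replace ((v * m) * (v * m) / 4) with ((v * v) * (m * m / 4)) by field.
      apply Rmult_le_compat_l. nra. nra. }
    apply Rmult_le_reg_l with u; lra.
  - apply Rmult_le_pos; auto. left; apply Rinv_0_lt_compat; auto.
Qed.
End X.

Definition GG (L v : R) := (ln (ln v) + 1) / (2 * L * v).
Definition PH (L v : R) := ln v * ln (ln v) / (2 * L).

Lemma PH_der L v : 0 < L -> 1 < v -> is_derive (PH L) v (GG L v).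
Proof.
  intros HL Hv. assert (0 < ln v) by (rewrite <- ln_1; apply ln_increasing; lra).
  unfold PH, GG. auto_derive. repeat split; lra. field. repeat split; lra.
Qed.

Lemma GG_cont L v : 0 < L -> 1 < v -> continuity_pt (GG L) v.
Proof.
  intros HL Hv. assert (0 < ln v) by (rewrite <- ln_1; apply ln_increasing; lra).
  apply continuity_pt_filterlim. apply (@ex_derive_continuous R_AbsRing R_NormedModule).
  assert (0 < 2 * L * v) by (apply Rmult_lt_0_compat; lra). unfold GG. auto_derive. repeat split; lra.
Qed.

Lemma int_GG L (HL : 1 <= L) H (HLd : L = ln H) (HH : exp 1 <= H) (pr : Riemann_integrable (GG L) (exp 1) H) :
  RiemannInt pr = ln L / 2.
Proof.
  pose proof (exp_pos 1). assert (He : 1 < exp 1) by (pose proof (exp_ineq1 1 ltac:(lra)); lra).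
  rewrite <- RInt_Reals.
  assert (Hi : is_RInt (GG L) (exp 1) H (minus (PH L H) (PH L (exp 1)))).
  { apply (is_RInt_derive (PH L) (GG L)).
    - intros x Hx. rewrite Rmin_left in Hx by lra. rewrite Rmax_right in Hx by lra. apply PH_der; lra.
    - intros x Hx. rewrite Rmin_left in Hx by lra. rewrite Rmax_right in Hx by lra.
      apply continuity_pt_filterlim. apply GG_cont; lra. }
  rewrite (is_RInt_unique _ _ _ _ Hi). unfold minus, plus, opp; simpl.
  unfold PH. rewrite ln_exp, ln_1, <- HLd. field. lra.
Qed.

Theorem theoremC6 :
  exists c H0 : R, 0 < c /\
    forall H : R, H0 <= H ->
      forall M : R, MBRev_ub H M -> c * ln (ln H) <= M.
Proof.
  exists (1/2), (exp 1). split; [lra|].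
  intros H HH M HM.
  pose proof (exp_pos 1). assert (He : 1 < exp 1) by (pose proof (exp_ineq1 1 ltac:(lra)); lra).
  assert (HL1 : 1 <= ln H) by (rewrite <- (ln_exp 1); apply ln_le; lra).
  assert (HL : 0 < ln H) by lra.
  assert (H1 : 1 <= H) by lra.
  set (F := fun v => q_erc v * mb_term (xx H) v).
  assert (pr : Riemann_integrable F 1 H).
  { apply continuity_implies_RiemannInt; [lra|]. intros p Hp. apply F_cont; auto; lra. }
  apply Rle_trans with (RiemannInt pr + (1 / H) * mb_term (xx H) H).
  2:{ apply (HM (xx H)). intros v Hv; apply xx_bounds; lra. exists pr; reflexivity. }
  pose (pr1 := RiemannInt_P22 pr (conj (Rlt_le _ _ He) HH)).
  pose (pr2 := RiemannInt_P23 pr (conj (Rlt_le _ _ He) HH)).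
  rewrite <- (RiemannInt_P26 pr1 pr2 pr).
  assert (I1 : 0 <= RiemannInt pr1).
  { assert (Z : RiemannInt (RiemannInt_P14 1 (exp 1) 0) = 0) by (rewrite RiemannInt_P15; ring).
    rewrite <- Z. apply RiemannInt_P19; [lra|]. intros v Hv. unfold fct_cte, F.
    apply Rmult_le_pos. unfold q_erc. apply Rdiv_le_0_compat; [lra|]. apply pow_lt; lra.
    apply mb_ge0; auto; lra. }
  assert (prG : Riemann_integrable (GG (ln H)) (exp 1) H).
  { apply continuity_implies_RiemannInt; [lra|]. intros p Hp. apply GG_cont; lra. }
  assert (I2 : RiemannInt prG <= RiemannInt pr2).
  { apply RiemannInt_P19; [lra|]. intros v Hv. unfold F, GG, mb_term, q_erc.
    pose proof (key_bound H HL v ltac:(lra)).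
    assert (Hx : xx H v = ln v / ln H) by (unfold xx; rewrite clip_le; lra).
    rewrite Hx.
    apply Rle_trans with (1 / v ^ 2 * (v * (ln v / ln H) - (v * ln v - v * (ln (ln v) + 1) / 2) / ln H)).
    - right. field. split; lra.
    - apply Rmult_le_compat_l. apply Rdiv_le_0_compat; [lra|]. apply pow_lt; lra. lra. }
  rewrite (int_GG (ln H) HL1 H eq_refl HH prG) in I2.
  assert (I3 : 0 <= 1 / H * mb_term (xx H) H).
  { apply Rmult_le_pos. apply Rdiv_le_0_compat; lra. apply mb_ge0; auto; lra. }
  lra.
Qed.
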